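(* For fixed positive integers $x$ and $y$, the expected maximum in-degree of the task-dependency graph generated by the $(x,y)$ edge-addition process on $n$ vertices is $\Theta(n)$, and the expected maximum out-degree of this graph is also $\Theta(n)$, as $n\to\infty$.
   Context: A task-dependency graph is a finite directed acyclic graph (no loops, no multiple edges). A vertex is initial if it has in-degree $0$ and terminal if it has out-degree $0$ (an isolated vertex is both). An $(x,y)$ task-dependency graph has exactly $x$ initial and exactly $y$ terminal vertices. The $(x,y)$ edge-addition process on $n$ vertices: start with the empty graph on $\{1,\dots,n\}$ and repeatedly add, uniformly at random, an edge $(a,b)$ with $a<b$ not yet present; if an addition would cause fewer than $x$ initial vertices or fewer than $y$ terminal vertices, it is cancelled. The process halts if the graph after some edge addition is an $(x,y)$ task-dependency graph, or if no more edges can be added; the result is the final graph. *)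

(* Defs.v *)
From mathcomp Require Import all_boot all_order all_algebra.
Set Implicit Arguments. Unset Strict Implicit. Unset Printing Implicit Defensive.
Import Order.TTheory GRing.Theory Num.Theory.

(* A graph on vertex set 'I_n (vertices 0..n-1 stand for 1..n) is a set of
   ordered pairs (a,b); the process only ever contains edges with a < b,
   so every graph it produces is acyclic (a task-dependency graph). *)
Definition dgraph (n : nat) := {set 'I_n * 'I_n}.

Definition indeg n (G : dgraph n) (v : 'I_n) : nat :=
  #|[set u : 'I_n | (u, v) \in G]|.
Definition outdeg n (G : dgraph n) (v : 'I_n) : nat :=
  #|[set w : 'I_n | (v, w) \in G]|.

Definition ninit n (G : dgraph n) : nat := #|[set v : 'I_n | indeg G v == 0]|.
Definition nterm n (G : dgraph n) : nat := #|[set v : 'I_n | outdeg G v == 0]|.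

Definition is_xy_tdg (x y : nat) n (G : dgraph n) : bool :=
  (ninit G == x) && (nterm G == y).

(* edges (a,b), a < b, not yet present, whose addition is NOT cancelled *)
Definition addable (x y : nat) n (G : dgraph n) : {set 'I_n * 'I_n} :=
  [set e : 'I_n * 'I_n |
    [&& (e.1 < e.2)%N, e \notin G, (x <= ninit (e |: G))%N
      & (y <= nterm (e |: G))%N]].

Definition halted (x y : nat) n (G : dgraph n) : bool :=
  is_xy_tdg x y G || (addable x y G == set0).

Local Open Scope ring_scope.

(* Expected value of f on the final graph of the process started from G,
   with k steps of fuel.  A cancelled addition leaves the graph unchanged and
   stays cancelled forever (adding edges only decreases the numbers of
   initial/terminal vertices), so the next effective addition is uniform
   among the addable edges. *)
Fixpoint expval (x y : nat) n (f : dgraph n -> rat) (k : nat) (G : dgraph n)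
  : rat :=
  match k with
  | 0 => f G
  | k'.+1 =>
      if halted x y G then f G
      else (\sum_(e in addable x y G) expval x y f k' (e |: G))
             / (#|addable x y G|%:R)
  end.

(* Expectation over the final graph of the (x,y) process on n vertices;
   the process performs at most n(n-1)/2 < n*n additions, so fuel n*n
   suffices. *)
Definition expected_final (x y n : nat) (f : dgraph n -> rat) : rat :=
  expval x y f (n * n) set0.

Definition maxindeg n (G : dgraph n) : nat := \max_(v : 'I_n) indeg G v.
Definition maxoutdeg n (G : dgraph n) : nat := \max_(v : 'I_n) outdeg G v.

Definition bigTheta_n (u : nat -> rat) : Prop :=
  exists (c1 c2 : rat) (N : nat),
    0 < c1 /\ 0 < c2 /\
    forall n : nat, (N <= n)%N -> c1 * n%:R <= u n <= c2 * n%:R.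
Arguments expected_final : clear implicits.

(* Main.v *)
Require Import Defs.
From mathcomp Require Import all_boot all_order all_algebra.
From mathcomp Require Import zify ring lra.
Set Implicit Arguments. Unset Strict Implicit. Unset Printing Implicit Defensive.
Import Order.TTheory GRing.Theory Num.Theory.

Lemma indeg0P n (G : dgraph n) v : (indeg G v == 0)%N = [forall u, (u, v) \notin G].
Proof.
rewrite /indeg cards_eq0; apply/eqP/forallP => [H u|H].
  by apply/negP => hu; have := in_set0 u; rewrite -H inE hu.
by apply/setP => u; rewrite !inE; apply/negbTE.
Qed.

Lemma outdeg0P n (G : dgraph n) v : (outdeg G v == 0)%N = [forall w, (v, w) \notin G].
Proof.
rewrite /outdeg cards_eq0; apply/eqP/forallP => [H u|H].
  by apply/negP => hu; have := in_set0 u; rewrite -H inE hu.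
by apply/setP => u; rewrite !inE; apply/negbTE.
Qed.

Lemma card_lt n j : (j <= n)%N -> #|[set v : 'I_n | (v < j)%N]| = j.
Proof.
move=> hj.
have -> : [set v : 'I_n | (v < j)%N] = [set widen_ord hj i | i in 'I_j].
  apply/setP => v; rewrite inE; apply/idP/imsetP => [hv|[i _ ->]] /=.
    by exists (Ordinal hv) => //; apply: val_inj.
  exact: ltn_ord.
by rewrite card_imset ?card_ord // => a b /(congr1 val) /= ab; apply: val_inj.
Qed.

Definition missing n (G : dgraph n) : {set 'I_n * 'I_n} :=
  [set e : 'I_n * 'I_n | (e.1 < e.2)%N && (e \notin G)].

Lemma addable_missing x y n (G : dgraph n) : addable x y G \subset missing G.
Proof. by apply/subsetP => e; rewrite !inE => /and4P[-> -> _ _]. Qed.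

Lemma missing_dec x y n (G : dgraph n) (e : 'I_n * 'I_n) : e \in addable x y G ->
  (#|missing (e |: G)| < #|missing G|)%N.
Proof.
move=> he; apply: proper_card; apply/properP; split.
  by apply/subsetP => f; rewrite !inE negb_or => /andP[-> /andP[_ ->]].
exists e; first by move/subsetP: (addable_missing x y G); apply.
by rewrite !inE eqxx /= andbF.
Qed.

Lemma term_sub n (G : dgraph n) (e : 'I_n * 'I_n) v :
  (outdeg G v == 0)%N -> v != e.1 -> (outdeg (e |: G) v == 0)%N.
Proof.
rewrite !outdeg0P => /forallP hv hne; apply/forallP => w.
rewrite !inE negb_or hv andbT.
by apply: contra hne => /eqP <-.
Qed.

Lemma nterm_add1 n (G : dgraph n) (e : 'I_n * 'I_n) : (nterm G <= (nterm (e |: G)).+1)%N.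
Proof.
rewrite /nterm -add1n.
apply: leq_trans (_ : #|e.1 |: [set v | outdeg (e |: G) v == 0%N]| <= _)%N.
  apply: subset_leq_card; apply/subsetP => v; rewrite !inE => hv.
  by case: eqP => //= /eqP hne; apply: term_sub.
by rewrite cardsU1; case: (_ \notin _).
Qed.

Lemma nterm_add2 n (G : dgraph n) (e : 'I_n * 'I_n) : (outdeg G e.1 != 0)%N ->
  (nterm G <= nterm (e |: G))%N.
Proof.
move=> h; apply: subset_leq_card; apply/subsetP => v; rewrite !inE => hv.
apply: term_sub => //; apply: contraNneq h => <-; exact: hv.
Qed.

Lemma init_sub n (G : dgraph n) (e : 'I_n * 'I_n) v :
  (indeg G v == 0)%N -> v != e.2 -> (indeg (e |: G) v == 0)%N.
Proof.
rewrite !indeg0P => /forallP hv hne; apply/forallP => w.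
rewrite !inE negb_or hv andbT.
by apply: contra hne => /eqP <-.
Qed.

Lemma ninit_add1 n (G : dgraph n) (e : 'I_n * 'I_n) : (ninit G <= (ninit (e |: G)).+1)%N.
Proof.
rewrite /ninit -add1n.
apply: leq_trans (_ : #|e.2 |: [set v | indeg (e |: G) v == 0%N]| <= _)%N.
  apply: subset_leq_card; apply/subsetP => v; rewrite !inE => hv.
  by case: eqP => //= /eqP hne; apply: init_sub.
by rewrite cardsU1; case: (_ \notin _).
Qed.

Lemma ninit_add2 n (G : dgraph n) (e : 'I_n * 'I_n) : (indeg G e.2 != 0)%N ->
  (ninit G <= ninit (e |: G))%N.
Proof.
move=> h; apply: subset_leq_card; apply/subsetP => v; rewrite !inE => hv.
apply: init_sub => //; apply: contraNneq h => <-; exact: hv.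
Qed.

Definition Efree x n (G : dgraph n) : bool := [forall e, (e \in G) ==> (x < e.2)%N].

Lemma Efree_add x n (G : dgraph n) (e : 'I_n * 'I_n) :
  Efree x (e |: G) = (x < e.2)%N && Efree x G.
Proof.
apply/forallP/andP => [H|[h1 /forallP h2] f].
  split; first by have := H e; rewrite setU11.
  by apply/forallP => f; apply/implyP => hf; have := H f; rewrite inE hf orbT.
by rewrite !inE; apply/implyP => /orP[/eqP ->|hf] //; have := h2 f; rewrite hf.
Qed.

Lemma Efree_init x n (G : dgraph n) : Efree x G -> (x.+1 <= n)%N -> (x.+1 <= ninit G)%N.
Proof.
move=> /forallP hE hx; rewrite -{1}(card_lt hx); apply: subset_leq_card.
apply/subsetP => v; rewrite !inE indeg0P => hv; apply/forallP => u.
by apply/negP => hu; have := hE (u, v); rewrite hu /= ltnNge -ltnS hv.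
Qed.

Lemma notHalt_A x y n (G : dgraph n) : ~~ halted x y G -> (0 < #|addable x y G|)%N.
Proof. by rewrite /halted negb_or card_gt0 => /andP[]. Qed.

Local Open Scope ring_scope.

Lemma expval_le x y n (f : dgraph n -> rat) B :
  (forall G, f G <= B) -> forall k G, expval x y f k G <= B.
Proof.
move=> hf; elim=> [|k IH] G /=; first exact: hf.
case: ifP => hH; first exact: hf.
have hA := notHalt_A (negbT hH).
rewrite ler_pdivrMr ?ltr0n //.
apply: le_trans (_ : \sum_(e in addable x y G) B <= _).
  by apply: ler_sum => e _; apply: IH.
by rewrite sumr_const mulr_natr.
Qed.

Lemma expval_ge x y n (f Phi : dgraph n -> rat) (Inv : nat -> dgraph n -> Prop) :
 (forall k G, Inv k.+1 G -> ~~ halted x y G -> forall e, e \in addable x y G -> Inv k (e |: G)) ->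
 (forall G, Inv 0%N G -> Phi G <= f G) ->
 (forall k G, Inv k G -> halted x y G -> Phi G <= f G) ->
 (forall k G, Inv k.+1 G -> ~~ halted x y G ->
    Phi G * (#|addable x y G|%:R) <= \sum_(e in addable x y G) Phi (e |: G)) ->
 forall k G, Inv k G -> Phi G <= expval x y f k G.
Proof.
move=> hI h0 hh hs; elim=> [|k IH] G hG /=; first exact: h0.
case: ifP => hH; first exact: hh hG hH.
have hA := notHalt_A (negbT hH).
rewrite ler_pdivlMr ?ltr0n //.
apply: le_trans (hs _ _ hG (negbT hH)) _.
by apply: ler_sum => e he; apply: IH; apply: hI hG (negbT hH) e he.
Qed.

Lemma sum_indic (T : finType) (A : {set T}) (b : pred T) :
  \sum_(e in A) ((b e)%:R : rat) = (#|[set e in A | b e]|)%:R.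
Proof.
rewrite -sumr_const big_mkcond [RHS]big_mkcond /=.
by apply: eq_bigr => e _; rewrite !inE; case: (e \in A); case: (b e).
Qed.

Local Close Scope ring_scope.

Local Close Scope ring_scope.

Lemma cardU_le (T : finType) (A B : {set T}) : (#|A :|: B| <= #|A| + #|B|)%N.
Proof. by rewrite cardsU leq_subr. Qed.

Lemma CL x y m (G : dgraph m.+1) : (x < m)%N -> Efree x G -> (y <= nterm G)%N ->
  (m.+1 <= #|[set e in addable x y G | e.2 == ord_max]| + y + indeg G ord_max + 1)%N.
Proof.
move=> hxm hE hy.
set L : 'I_m.+1 := ord_max.
set P := [set a : 'I_m.+1 | (a, L) \notin G].
have hP : (#|P| + indeg G L = m.+1)%N.
  have -> : P = ~: [set u | (u, L) \in G] by apply/setP => a; rewrite !inE.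
  by rewrite /indeg addnC cardsC card_ord.
set Aa := [set a | (a, L) \in addable x y G].
set B := [set a : 'I_m.+1 | (outdeg G a == 0%N) && (nterm G <= y)%N].
have hB : (#|B| <= y)%N.
  case: (leqP (nterm G) y) => hn.
    apply: leq_trans hn; apply: subset_leq_card; apply/subsetP => a.
    by rewrite !inE => /andP[].
  suff -> : B = set0 by rewrite cards0.
  by apply/setP => a; rewrite !inE leqNgt hn andbF.
have hAa : (#|Aa| <= #|[set e in addable x y G | e.2 == L]|)%N.
  rewrite -(card_imset (mem Aa) (f := fun a => (a, L))); last by move=> a b [].
  apply: subset_leq_card; apply/subsetP => e /imsetP [a]; rewrite !inE => ha ->.
  by rewrite ha /= eqxx.
have sub : P \subset Aa :|: (L |: B).
  apply/subsetP => a; rewrite !inE => Pa.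
  case: (a =P L) => [->|/eqP hne]; first by apply/or3P; apply: Or32.
  have haL : (a < L)%N.
    by move: hne (ltn_ord a); rewrite -(inj_eq val_inj) /L /=; lia.
  case hBa : ((outdeg G a == 0%N) && (nterm G <= y)%N); first by apply/or3P; apply: Or33.
  apply/orP; left; rewrite haL Pa /=.
  apply/andP; split.
    apply: leq_trans (Efree_init _ _); first exact: leqnSn.
      by rewrite Efree_add hE andbT /=.
    lia.
  move/negbT: hBa; rewrite negb_and => /orP[h|h].
    exact: leq_trans hy (@nterm_add2 _ G (a, L) h).
  rewrite -ltnNge in h.
  by rewrite -ltnS; apply: leq_trans h (nterm_add1 G (a, L)).
have hPQ : (#|P| <= #|Aa| + 1 + #|B|)%N.
  apply: leq_trans (subset_leq_card sub) _.
  apply: leq_trans (cardU_le Aa (L |: B)) _.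
  rewrite cardsU1 -addnA leq_add2l leq_add2r.
  by case: (L \notin B).
rewrite -{1}hP.
apply: leq_trans (leq_add (leq_trans hPQ (leq_add (leq_add hAa (leqnn 1)) hB)) (leqnn (indeg G L))) _.
apply: eq_leq; rewrite -!addnA; congr (_ + _); lia.
Qed.

Lemma IL x y n (G : dgraph n) : (x < n)%N ->
  (#|[set e in addable x y G | (e.2 <= x)%N]| <= x.+1 * x.+1)%N.
Proof.
move=> hx.
set S := [set v : 'I_n | (v < x.+1)%N].
apply: leq_trans (_ : #|setX S S| <= _)%N.
  apply: subset_leq_card; apply/subsetP => e; rewrite !inE => /andP[/and4P[h1 _ _ _] h2].
  rewrite !ltnS h2 andbT; exact: leq_trans (ltnW h1) h2.
by rewrite cardsX /S card_lt.
Qed.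

Lemma indeg_add n (G : dgraph n) (e : 'I_n * 'I_n) v : e \notin G ->
  indeg (e |: G) v = (indeg G v + (e.2 == v))%N.
Proof.
move=> he; rewrite /indeg.
case: eqP => hv; last first.
  rewrite addn0; apply: eq_card => u; rewrite !inE.
  case: eqP => //= hu; case: hv; by rewrite -hu.
rewrite addn1.
have -> : [set u | (u, v) \in e |: G] = e.1 |: [set u | (u, v) \in G].
  apply/setP => u; rewrite !inE; congr (_ || _).
  by rewrite -hv; case: e {he hv} => a b /=; rewrite xpair_eqE eqxx andbT.
by rewrite cardsU1 inE -hv -surjective_pairing he.
Qed.

Lemma indeg_mono n (G : dgraph n) (e : 'I_n * 'I_n) v :
  (indeg G v <= indeg (e |: G) v)%N.
Proof.
apply: subset_leq_card; apply/subsetP => u; rewrite !inE => ->; exact: orbT.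
Qed.

Local Open Scope ring_scope.

Definition alpha (x : nat) : rat := ((x.+1 * x.+1).+1)%:R^-1.
Definition kk y m (G : dgraph m.+1) : rat := m%:R - y%:R - (indeg G ord_max)%:R.
Definition Phi x y m (G : dgraph m.+1) : rat :=
  (indeg G ord_max)%:R + (if Efree x G then alpha x * kk y G else 0).

Lemma alpha_prop x : alpha x * ((x.+1 * x.+1)%:R + 1) = 1 /\ 0 < alpha x.
Proof.
rewrite /alpha natr1; split; first by rewrite mulVf // pnatr_eq0.
by rewrite invr_gt0 ltr0n.
Qed.

Lemma Phi_edge x y m (G : dgraph m.+1) (e : 'I_m.+1 * 'I_m.+1) :
  (x < m)%N -> Efree x G -> e \notin G ->
  Phi x y (e |: G) = Phi x y G + (e.2 == ord_max)%:R * (1 - alpha x)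
                     - (e.2 <= x)%N%:R * (alpha x * kk y G).
Proof.
move=> hxm hE he.
rewrite /Phi /kk Efree_add hE andbT indeg_add //.
have [h2|h2] := eqVneq e.2 ord_max.
  rewrite h2 /= hxm leqNgt hxm /= natrD; ring.
rewrite /= addn0 ltnNge.
case: (e.2 <= x)%N => /=; ring.
Qed.

Lemma Phi_mono x y m (G : dgraph m.+1) (e : 'I_m.+1 * 'I_m.+1) :
  ~~ Efree x G -> Phi x y G <= Phi x y (e |: G).
Proof.
move=> hE; rewrite /Phi Efree_add (negbTE hE) andbF !addr0 ler_nat.
exact: indeg_mono.
Qed.

Lemma kk_le x y m (G : dgraph m.+1) : (x < m)%N -> Efree x G -> (y <= nterm G)%N ->
  kk y G <= #|[set e in addable x y G | e.2 == ord_max]|%:R.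
Proof.
move=> hxm hE hy; have := CL hxm hE hy.
rewrite addn1 ltnS -(ler_nat rat) !natrD /kk => h.
lra.
Qed.

Lemma Phi_halt x y m (G : dgraph m.+1) : (x < m)%N -> (y <= nterm G)%N ->
  halted x y G -> Phi x y G <= (maxindeg G)%:R.
Proof.
move=> hxm hy hH.
have hd : (indeg G ord_max)%:R <= (maxindeg G)%:R :> rat.
  by rewrite ler_nat; exact: (@leq_bigmax _ (fun v => indeg G v) ord_max).
rewrite /Phi; case: ifP => hE; last by rewrite addr0.
have hA : addable x y G = set0.
  move: hH; rewrite /halted /is_xy_tdg => /orP[/andP[/eqP hi _]|/eqP //].
  by have := Efree_init hE (ltnW hxm : (x < m.+1)%N); rewrite hi ltnn.
have hQ : #|[set e in addable x y G | e.2 == ord_max]| = 0%N.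
  by apply/eqP; rewrite cards_eq0; apply/eqP/setP => e; rewrite inE hA in_set0.
have := kk_le hxm hE hy; rewrite hQ => hk.
have [_ ha] := alpha_prop x.
apply: le_trans hd; rewrite -{2}(addr0 (indeg G ord_max)%:R) lerD2l.
by apply: mulr_ge0_le0 => //; apply: ltW.
Qed.

Lemma arith_key (P a C k Q R : rat) : a * (C + 1) = 1 -> 0 < a -> 0 <= Q -> 0 <= R ->
  k <= Q -> R <= C -> P <= P + Q * (1 - a) - R * (a * k).
Proof.
move=> h1 h2 hQ0 hR0 hQ hR.
have e1 : 1 - a = a * C by lra.
rewrite e1 -addrA lerDl.
have : 0 <= a * (Q * C - R * k).
  apply: mulr_ge0; first exact: ltW.
  have hC : 0 <= C by lra.
  case: (leP k 0) => hk.
    have q0 : 0 <= Q * C by apply: mulr_ge0.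
    have rk : R * k <= 0 by apply: mulr_ge0_le0.
    lra.
  have t1 : R * k <= C * k by have := ler_wpM2r (ltW hk) hR.
  have t2 : k * C <= Q * C by have := ler_wpM2r hC hQ.
  rewrite [C * k]mulrC in t1.
  lra.
move=> h; apply: le_trans h _; rewrite le_eqVlt; apply/orP; left; apply/eqP; ring.
Qed.

Lemma Phi_step x y m (G : dgraph m.+1) : (x < m)%N -> (y <= nterm G)%N ->
  Phi x y G * (#|addable x y G|%:R) <= \sum_(e in addable x y G) Phi x y (e |: G).
Proof.
move=> hxm hy.
case hE : (Efree x G); last first.
  rewrite mulr_natr -sumr_const; apply: ler_sum => e _.
  by apply: Phi_mono; rewrite hE.
rewrite (eq_bigr (fun e => Phi x y G + (e.2 == ord_max)%:R * (1 - alpha x)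
                     - (e.2 <= x)%N%:R * (alpha x * kk y G))); last first.
  move=> e; rewrite inE => /and4P[_ he _ _]; exact: Phi_edge.
rewrite sumrB big_split /= sumr_const -!mulr_suml mulr_natr.
rewrite (sum_indic (addable x y G) (fun e : 'I_m.+1 * 'I_m.+1 => e.2 == ord_max)).
rewrite (sum_indic (addable x y G) (fun e : 'I_m.+1 * 'I_m.+1 => (e.2 <= x)%N)).
have hQ := kk_le hxm hE hy.
have hR : #|[set e in addable x y G | (e.2 <= x)%N]|%:R <= (x.+1 * x.+1)%:R :> rat.
  by rewrite ler_nat; apply: IL; apply: ltnW.
move: hQ hR; apply: arith_key; first exact: (alpha_prop x).1.
exact: (alpha_prop x).2.
all: exact: ler0n.
Qed.

Lemma nterm0 n : nterm (set0 : dgraph n) = n.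
Proof.
rewrite /nterm -[RHS](card_ord n); apply: eq_card => v.
by rewrite !inE outdeg0P; apply/forallP => w; rewrite in_set0.
Qed.

Lemma ninit0 n : ninit (set0 : dgraph n) = n.
Proof.
rewrite /ninit -[RHS](card_ord n); apply: eq_card => v.
by rewrite !inE indeg0P; apply/forallP => w; rewrite in_set0.
Qed.

Lemma missing_le n (G : dgraph n) : (#|missing G| <= n * n)%N.
Proof. by apply: leq_trans (max_card _) _; rewrite card_prod card_ord. Qed.

Lemma missing0_halt x y n (G : dgraph n) : (#|missing G| <= 0)%N -> halted x y G.
Proof.
move=> h; apply/orP; right; rewrite -subset0.
apply: subset_trans (addable_missing x y G) _.
by rewrite subset0 -cards_eq0 -leqn0.
Qed.

Lemma in_lower x y m : (x < m)%N -> (y <= m.+1)%N ->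
  alpha x * (m%:R - y%:R) <= expected_final x y m.+1 (fun G => (maxindeg G)%:R).
Proof.
move=> hxm hym.
have key : forall k (G : dgraph m.+1), (y <= nterm G)%N /\ (#|missing G| <= k)%N ->
    Phi x y G <= expval x y (fun G => (maxindeg G)%:R) k G.
  apply: expval_ge.
  - move=> k G [h1 h2] hH e he; split.
      by move: he; rewrite inE => /and4P[].
    by rewrite -ltnS; apply: leq_trans (missing_dec he) h2.
  - by move=> G [h1 h2]; apply: Phi_halt => //; apply: missing0_halt.
  - by move=> k G [h1 h2] hH; apply: Phi_halt.
  - by move=> k G [h1 h2] hH; apply: Phi_step.
have hE0 : Efree x (set0 : dgraph m.+1).
  by apply/forallP => e; rewrite in_set0.
have hd0 : indeg (set0 : dgraph m.+1) ord_max = 0%N.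
  by apply/eqP; rewrite indeg0P; apply/forallP => u; rewrite in_set0.
have := key (m.+1 * m.+1)%N set0.
rewrite /expected_final /Phi hE0 hd0 /kk hd0 add0r subr0.
apply; split; first by rewrite nterm0.
exact: missing_le.
Qed.

Local Close Scope ring_scope.

Definition Ofree y m (G : dgraph m.+1) : bool :=
  [forall e, (e \in G) ==> (e.1 < m - y)%N].

Lemma Ofree_add y m (G : dgraph m.+1) (e : 'I_m.+1 * 'I_m.+1) :
  Ofree y (e |: G) = (e.1 < m - y)%N && Ofree y G.
Proof.
apply/forallP/andP => [H|[h1 /forallP h2] f].
  split; first by have := H e; rewrite setU11.
  by apply/forallP => f; apply/implyP => hf; have := H f; rewrite inE hf orbT.
by rewrite !inE; apply/implyP => /orP[/eqP ->|hf] //; have := h2 f; rewrite hf.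
Qed.

Lemma Ofree_term y m (G : dgraph m.+1) : Ofree y G -> (y <= m)%N -> (y.+1 <= nterm G)%N.
Proof.
move=> /forallP hE hy.
have hc : #|~: [set v : 'I_m.+1 | (v < m - y)%N]| = y.+1.
  have := cardsC [set v : 'I_m.+1 | (v < m - y)%N].
  rewrite card_lt ?card_ord; lia.
rewrite -hc; apply: subset_leq_card.
apply/subsetP => v; rewrite !inE outdeg0P => hv; apply/forallP => w.
by apply/negP => hw; have := hE (v, w); rewrite hw /= (negbTE hv).
Qed.

Lemma outdeg_add n (G : dgraph n) (e : 'I_n * 'I_n) v : e \notin G ->
  outdeg (e |: G) v = (outdeg G v + (e.1 == v))%N.
Proof.
move=> he; rewrite /outdeg.
case: eqP => hv; last first.
  rewrite addn0; apply: eq_card => u; rewrite !inE.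
  case: eqP => //= hu; case: hv; by rewrite -hu.
rewrite addn1.
have -> : [set u | (v, u) \in e |: G] = e.2 |: [set u | (v, u) \in G].
  apply/setP => u; rewrite !inE; congr (_ || _).
  by rewrite -hv; case: e {he hv} => a b /=; rewrite xpair_eqE eqxx.
by rewrite cardsU1 inE -hv -surjective_pairing he.
Qed.

Lemma outdeg_mono n (G : dgraph n) (e : 'I_n * 'I_n) v :
  (outdeg G v <= outdeg (e |: G) v)%N.
Proof.
apply: subset_leq_card; apply/subsetP => u; rewrite !inE => ->; exact: orbT.
Qed.

Lemma CLo x y m (G : dgraph m.+1) : (y < m)%N -> Ofree y G -> (x <= ninit G)%N ->
  (m.+1 <= #|[set e in addable x y G | e.1 == ord0]| + x + outdeg G ord0 + 1)%N.
Proof.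
move=> hym hE hx.
set L : 'I_m.+1 := ord0.
set P := [set a : 'I_m.+1 | (L, a) \notin G].
have hP : (#|P| + outdeg G L = m.+1)%N.
  have -> : P = ~: [set u | (L, u) \in G] by apply/setP => a; rewrite !inE.
  by rewrite /outdeg addnC cardsC card_ord.
set Aa := [set a | (L, a) \in addable x y G].
set B := [set a : 'I_m.+1 | (indeg G a == 0%N) && (ninit G <= x)%N].
have hB : (#|B| <= x)%N.
  case: (leqP (ninit G) x) => hn.
    apply: leq_trans hn; apply: subset_leq_card; apply/subsetP => a.
    by rewrite !inE => /andP[].
  suff -> : B = set0 by rewrite cards0.
  by apply/setP => a; rewrite !inE leqNgt hn andbF.
have hAa : (#|Aa| <= #|[set e in addable x y G | e.1 == L]|)%N.
  rewrite -(card_imset (mem Aa) (f := fun a => (L, a))); last by move=> a b [].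
  apply: subset_leq_card; apply/subsetP => e /imsetP [a]; rewrite !inE => ha ->.
  by rewrite ha /= eqxx.
have sub : P \subset Aa :|: (L |: B).
  apply/subsetP => a; rewrite !inE => Pa.
  case: (a =P L) => [->|/eqP hne]; first by apply/or3P; apply: Or32.
  have haL : (L < a)%N.
    by move: hne; rewrite -(inj_eq val_inj) /L /=; lia.
  case hBa : ((indeg G a == 0%N) && (ninit G <= x)%N); first by apply/or3P; apply: Or33.
  apply/orP; left; rewrite haL Pa /=.
  apply/andP; split; last first.
    apply: leq_trans (Ofree_term _ _); first exact: leqnSn.
      by rewrite Ofree_add hE andbT /=; lia.
    lia.
  move/negbT: hBa; rewrite negb_and => /orP[h|h].
    exact: leq_trans hx (@ninit_add2 _ G (L, a) h).
  rewrite -ltnNge in h.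
  by rewrite -ltnS; apply: leq_trans h (ninit_add1 G (L, a)).
have hPQ : (#|P| <= #|Aa| + 1 + #|B|)%N.
  apply: leq_trans (subset_leq_card sub) _.
  apply: leq_trans (cardU_le Aa (L |: B)) _.
  rewrite cardsU1 -addnA leq_add2l leq_add2r.
  by case: (L \notin B).
rewrite -{1}hP.
apply: leq_trans (leq_add (leq_trans hPQ (leq_add (leq_add hAa (leqnn 1)) hB)) (leqnn (outdeg G L))) _.
apply: eq_leq; rewrite -!addnA; congr (_ + _); lia.
Qed.

Lemma ILo x y m (G : dgraph m.+1) : (y <= m)%N ->
  (#|[set e in addable x y G | (m - y <= e.1)%N]| <= y.+1 * y.+1)%N.
Proof.
move=> hy.
set S := ~: [set v : 'I_m.+1 | (v < m - y)%N].
have hc : #|S| = y.+1.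
  have := cardsC [set v : 'I_m.+1 | (v < m - y)%N].
  rewrite /S card_lt ?card_ord; lia.
apply: leq_trans (_ : #|setX S S| <= _)%N; last by rewrite cardsX hc.
apply: subset_leq_card; apply/subsetP => e; rewrite !inE => /andP[/and4P[h1 _ _ _] h2].
rewrite -!leqNgt h2 /=; exact: leq_trans h2 (ltnW h1).
Qed.

Local Open Scope ring_scope.

Definition kko x m (G : dgraph m.+1) : rat := m%:R - x%:R - (outdeg G ord0)%:R.
Definition Phio x y m (G : dgraph m.+1) : rat :=
  (outdeg G ord0)%:R + (if Ofree y G then alpha y * kko x G else 0).

Lemma Phio_edge x y m (G : dgraph m.+1) (e : 'I_m.+1 * 'I_m.+1) :
  (y < m)%N -> Ofree y G -> e \notin G ->
  Phio x y (e |: G) = Phio x y G + (e.1 == ord0)%:R * (1 - alpha y)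
                     - (m - y <= e.1)%N%:R * (alpha y * kko x G).
Proof.
move=> hym hE he.
rewrite /Phio /kko Ofree_add hE andbT outdeg_add //.
have [h2|h2] := eqVneq e.1 ord0.
  rewrite h2 /=.
  have -> : (0 < m - y)%N by lia.
  have -> : (m - y <= 0)%N = false by lia.
  rewrite natrD /=; ring.
rewrite /= addn0 ltnNge.
case: (m - y <= e.1)%N => /=; ring.
Qed.

Lemma Phio_mono x y m (G : dgraph m.+1) (e : 'I_m.+1 * 'I_m.+1) :
  ~~ Ofree y G -> Phio x y G <= Phio x y (e |: G).
Proof.
move=> hE; rewrite /Phio Ofree_add (negbTE hE) andbF !addr0 ler_nat.
exact: outdeg_mono.
Qed.

Lemma kko_le x y m (G : dgraph m.+1) : (y < m)%N -> Ofree y G -> (x <= ninit G)%N ->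
  kko x G <= #|[set e in addable x y G | e.1 == ord0]|%:R.
Proof.
move=> hym hE hx; have := CLo hym hE hx.
rewrite addn1 ltnS -(ler_nat rat) !natrD /kko => h.
lra.
Qed.

Lemma Phio_halt x y m (G : dgraph m.+1) : (y < m)%N -> (x <= ninit G)%N ->
  halted x y G -> Phio x y G <= (maxoutdeg G)%:R.
Proof.
move=> hym hx hH.
have hd : (outdeg G ord0)%:R <= (maxoutdeg G)%:R :> rat.
  by rewrite ler_nat; exact: (@leq_bigmax _ (fun v => outdeg G v) ord0).
rewrite /Phio; case: ifP => hE; last by rewrite addr0.
have hA : addable x y G = set0.
  move: hH; rewrite /halted /is_xy_tdg => /orP[/andP[_ /eqP hi]|/eqP //].
  by have := Ofree_term hE (ltnW hym); rewrite hi ltnn.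
have hQ : #|[set e in addable x y G | e.1 == ord0]| = 0%N.
  by apply/eqP; rewrite cards_eq0; apply/eqP/setP => e; rewrite inE hA in_set0.
have := kko_le hym hE hx; rewrite hQ => hk.
have [_ ha] := alpha_prop y.
apply: le_trans hd; rewrite -{2}(addr0 (outdeg G ord0)%:R) lerD2l.
by apply: mulr_ge0_le0 => //; apply: ltW.
Qed.

Lemma Phio_step x y m (G : dgraph m.+1) : (y < m)%N -> (x <= ninit G)%N ->
  Phio x y G * (#|addable x y G|%:R) <= \sum_(e in addable x y G) Phio x y (e |: G).
Proof.
move=> hym hx.
case hE : (Ofree y G); last first.
  rewrite mulr_natr -sumr_const; apply: ler_sum => e _.
  by apply: Phio_mono; rewrite hE.
rewrite (eq_bigr (fun e => Phio x y G + (e.1 == ord0)%:R * (1 - alpha y)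
                     - (m - y <= e.1)%N%:R * (alpha y * kko x G))); last first.
  move=> e; rewrite inE => /and4P[_ he _ _]; exact: Phio_edge.
rewrite sumrB big_split /= sumr_const -!mulr_suml mulr_natr.
rewrite (sum_indic (addable x y G) (fun e : 'I_m.+1 * 'I_m.+1 => e.1 == ord0)).
rewrite (sum_indic (addable x y G) (fun e : 'I_m.+1 * 'I_m.+1 => (m - y <= e.1)%N)).
have hQ := kko_le hym hE hx.
have hR : #|[set e in addable x y G | (m - y <= e.1)%N]|%:R <= (y.+1 * y.+1)%:R :> rat.
  by rewrite ler_nat; apply: ILo; apply: ltnW.
move: hQ hR; apply: arith_key; first exact: (alpha_prop y).1.
exact: (alpha_prop y).2.
all: exact: ler0n.
Qed.

Lemma out_lower x y m : (y < m)%N -> (x <= m.+1)%N ->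
  alpha y * (m%:R - x%:R) <= expected_final x y m.+1 (fun G => (maxoutdeg G)%:R).
Proof.
move=> hym hxm.
have key : forall k (G : dgraph m.+1), (x <= ninit G)%N /\ (#|missing G| <= k)%N ->
    Phio x y G <= expval x y (fun G => (maxoutdeg G)%:R) k G.
  apply: expval_ge.
  - move=> k G [h1 h2] hH e he; split.
      by move: he; rewrite inE => /and4P[].
    by rewrite -ltnS; apply: leq_trans (missing_dec he) h2.
  - by move=> G [h1 h2]; apply: Phio_halt => //; apply: missing0_halt.
  - by move=> k G [h1 h2] hH; apply: Phio_halt.
  - by move=> k G [h1 h2] hH; apply: Phio_step.
have hE0 : Ofree y (set0 : dgraph m.+1).
  by apply/forallP => e; rewrite in_set0.
have hd0 : outdeg (set0 : dgraph m.+1) ord0 = 0%N.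
  by apply/eqP; rewrite outdeg0P; apply/forallP => u; rewrite in_set0.
have := key (m.+1 * m.+1)%N set0.
rewrite /expected_final /Phio hE0 hd0 /kko hd0 add0r subr0.
apply; split; first by rewrite ninit0.
exact: missing_le.
Qed.

Local Close Scope ring_scope.

Local Open Scope ring_scope.

Lemma maxindeg_le n (G : dgraph n) : ((maxindeg G)%:R : rat) <= n%:R.
Proof.
rewrite ler_nat; apply/bigmax_leqP => v _.
by apply: leq_trans (max_card _) _; rewrite card_ord.
Qed.

Lemma maxoutdeg_le n (G : dgraph n) : ((maxoutdeg G)%:R : rat) <= n%:R.
Proof.
rewrite ler_nat; apply/bigmax_leqP => v _.
by apply: leq_trans (max_card _) _; rewrite card_ord.
Qed.

Lemma half_bound (a : rat) (m z : nat) : 0 < a -> (2 * z + 1 <= m)%N ->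
  a / 2 * (m.+1)%:R <= a * (m%:R - z%:R).
Proof.
move=> ha hm.
have e : a / 2 * (m.+1)%:R = a * ((m.+1)%:R / 2) by ring.
rewrite e; apply: ler_wpM2l; first exact: ltW.
have : ((2 * z + 1)%N%:R : rat) <= m%:R by rewrite ler_nat.
rewrite natrD natrM -natr1 => h.
rewrite ler_pdivrMr; last by []. rewrite -natr1. lra.
Qed.

Theorem mainTheorem16 (x y : nat) (hx : (0 < x)%N) (hy : (0 < y)%N) :
  bigTheta_n (fun n => expected_final x y n (fun G : dgraph n => ((maxindeg G)%:R : rat)))
  /\ bigTheta_n (fun n => expected_final x y n (fun G : dgraph n => ((maxoutdeg G)%:R : rat))).
Proof.
have [hax hax'] := alpha_prop x.
have [hay hay'] := alpha_prop y.
split.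
- exists (alpha x / 2), 1, (2 * (x + y) + 2)%N.
  split; first by rewrite divr_gt0.
  split; first exact: ltr01.
  case=> [|m] hn; first by exfalso; lia.
  apply/andP; split.
    apply: le_trans (in_lower (y := y) _ _); first by apply: half_bound => //; lia.
      lia.
    lia.
  by rewrite mul1r; apply: expval_le => G; apply: maxindeg_le.
- exists (alpha y / 2), 1, (2 * (x + y) + 2)%N.
  split; first by rewrite divr_gt0.
  split; first exact: ltr01.
  case=> [|m] hn; first by exfalso; lia.
  apply/andP; split.
    apply: le_trans (out_lower (x := x) _ _); first by apply: half_bound => //; lia.
      lia.
    lia.
  by rewrite mul1r; apply: expval_le => G; apply: maxoutdeg_le.
Qed.

Local Close Scope ring_scope.
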